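(* Let $\mathcal W_1$ be a discrete memoryless channel from $\mathcal X_1$ to $\mathcal Y_1$ and $\mathcal W_2$ one from $\mathcal X_2$ to $\mathcal Y_2$ (all finite sets), and let $(\mathcal W_1\times\mathcal W_2)(y_1,y_2|x_1,x_2)=\mathcal W_1(y_1|x_1)\mathcal W_2(y_2|x_2)$. Then $U(\mathcal W_1\times\mathcal W_2)=U(\mathcal W_1)+U(\mathcal W_2)$.
   Context: $D(P\|Q)=\sum P\log(P/Q)$ ($0\log(0/q)=0$; $+\infty$ if $P\not\ll Q$). For a channel $\mathcal W$ from $\mathcal X$ to $\mathcal Y$, $U(\mathcal W)=\max_{P_X\in\mathcal P(\mathcal X)}\min_{Q_Y\in\mathcal P(\mathcal Y)}D(P_X\times Q_Y\|P_{XY})$ with $P_{XY}(x,y)=P_X(x)\mathcal W(y|x)$. *)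

(* Defs.v *)
From HB Require Import structures.
From mathcomp Require Import all_boot all_order all_algebra.
From mathcomp Require Import all_classical all_reals all_analysis.
Set Implicit Arguments. Unset Strict Implicit. Unset Printing Implicit Defensive.
Import Order.TTheory GRing.Theory Num.Theory.
Local Open Scope classical_set_scope.
Local Open Scope ring_scope.

Definition dists (R : realType) (T : finType) : set (T -> R) :=
  [set P | (forall t, 0 <= P t) /\ \sum_(t : T) P t = 1].

(* a discrete memoryless channel: a stochastic matrix W(y|x) = W x y *)
Definition is_channel (R : realType) (X Y : finType) (W : X -> Y -> R) : Prop :=
  (forall x y, 0 <= W x y) /\ (forall x, \sum_(y : Y) W x y = 1).

Definition KL (R : realType) (T : finType) (P Q : T -> R) : \bar R :=
  if `[< exists t, P t != 0 /\ Q t = 0 >] then +oo%E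
  else (\sum_(t : T) (if P t == 0 then 0 else P t * ln (P t / Q t)))%:E.

Definition prod_channel (R : realType) (X1 Y1 X2 Y2 : finType)
  (W1 : X1 -> Y1 -> R) (W2 : X2 -> Y2 -> R) : (X1 * X2)%type -> (Y1 * Y2)%type -> R :=
  fun x y => W1 x.1 y.1 * W2 x.2 y.2.

Definition Uch (R : realType) (X Y : finType) (W : X -> Y -> R) : \bar R :=
  ereal_sup ((fun PX : X -> R =>
     ereal_inf ((fun QY : Y -> R =>
        KL (fun xy : (X * Y)%type => PX xy.1 * QY xy.2)
           (fun xy : (X * Y)%type => PX xy.1 * W xy.1 xy.2)) @` @dists R Y)) @` @dists R X).

(* Main.v *)
Require Import Defs.
From HB Require Import structures.
From mathcomp Require Import all_boot all_order all_algebra.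
From mathcomp Require Import all_classical all_reals all_analysis.
From mathcomp Require Import ring lra.
Set Implicit Arguments. Unset Strict Implicit. Unset Printing Implicit Defensive.
Import Order.TTheory GRing.Theory Num.Theory.
Local Open Scope classical_set_scope.
Local Open Scope ring_scope.

Section Chan.
Context (R : realType) (X Y : finType) (W : X -> Y -> R) (P : X -> R).

Definition good (y : Y) : bool := [forall x, (P x != 0) ==> (W x y != 0)].
Definition Lf (y : Y) : R := \sum_x P x * ln (W x y).
Definition af (y : Y) : R := if good y then expR (Lf y) else 0.
Definition Sf : R := \sum_y af y.
Definition Vc : \bar R := if 0 < Sf then (- ln Sf)%:E else +oo%E.

Hypothesis W0 : forall x y, 0 <= W x y.
Hypothesis HP : dists P.

Lemma af_ge0 y : 0 <= af y.
Proof. by rewrite /af; case: ifP => // _; exact/ltW/expR_gt0. Qed.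

Lemma Sf_ge0 : 0 <= Sf.
Proof. by apply: sumr_ge0 => y _; exact: af_ge0. Qed.

Lemma KL_form (Q : Y -> R) : dists Q ->
  KL (fun xy : (X * Y)%type => P xy.1 * Q xy.2)
     (fun xy : (X * Y)%type => P xy.1 * W xy.1 xy.2) =
  if [exists y, (Q y != 0) && ~~ good y] then +oo%E
  else (\sum_y (if Q y == 0 then 0 else Q y * (ln (Q y) - Lf y)))%:E.
Proof.
move=> [Q0 Q1]; case: HP => P0 P1; rewrite /KL.
case: (boolP [exists y, _]) => Hb.
  rewrite asboolT //; move/existsP: Hb => [y /andP[Qy /forallPn [x]]].
  rewrite negb_imply negbK => /andP[Px /eqP Wxy].
  by exists (x, y); split; [rewrite mulf_neq0 | rewrite /= Wxy mulr0].
rewrite asboolF; last first.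
  move=> [[x y] /= [h1 /eqP h2]]; apply: (negP Hb); apply/existsP; exists y.
  move: h1; rewrite mulf_eq0 negb_or => /andP[Px Qy]; rewrite Qy /=.
  apply/forallPn; exists x; rewrite Px /= negbK.
  by move: h2; rewrite mulf_eq0 (negbTE Px).
congr EFin.
rewrite -(pair_big xpredT xpredT (fun x y =>
  if P x * Q y == 0 then 0 else P x * Q y * ln (P x * Q y / (P x * W x y)))) /=.
rewrite exchange_big /=; apply: eq_bigr => y _.
case: (eqVneq (Q y) 0) => Qy.
  by apply: big1 => x _; rewrite Qy mulr0 eqxx.
have gy : good y.
  by apply: contraNT Hb => ng; apply/existsP; exists y; rewrite Qy.
have Qp : 0 < Q y by rewrite lt_def Qy Q0.
transitivity (\sum_x (P x * Q y * ln (Q y) - Q y * (P x * ln (W x y)))).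
  apply: eq_bigr => x _.
  case: (eqVneq (P x) 0) => Px.
    by rewrite Px !GRing.mul0r eqxx GRing.mulr0 subr0.
  have Wp : 0 < W x y.
    by rewrite lt_def W0 andbT; move/forallP: gy => /(_ x); rewrite Px.
  rewrite mulf_eq0 (negbTE Px) (negbTE Qy) /=.
  have -> : P x * Q y / (P x * W x y) = Q y / W x y.
    by rewrite invfM mulrACA mulfV // mul1r.
  rewrite ln_div ?posrE //; ring.
by rewrite sumrB -!big_distrl -big_distrr /= P1 mul1r mulrBr.
Qed.


Lemma exists_pos (Q : Y -> R) : dists Q -> exists y, Q y != 0.
Proof.
move=> [_ Q1]; case: (pickP (fun y => Q y != 0)) => [y Hy|H]; first by exists y.
exfalso; move: Q1; rewrite big1 => [|y _]; first by move/eqP; rewrite eq_sym oner_eq0.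
by apply/eqP; move/negbFE: (H y).
Qed.

Lemma gibbs (Q : Y -> R) : dists Q -> ~~ [exists y, (Q y != 0) && ~~ good y] ->
  0 < Sf /\ - ln Sf <= \sum_y (if Q y == 0 then 0 else Q y * (ln (Q y) - Lf y)).
Proof.
move=> HQ Hb; have [Q0 Q1] := HQ.
have gQ : forall y, Q y != 0 -> good y.
  by move=> y Qy; apply: contraNT Hb => ng; apply/existsP; exists y; rewrite Qy.
have Spos : 0 < Sf.
  have [y Qy] := exists_pos HQ.
  rewrite /Sf (bigD1 y) //=.
  have h1 : 0 <= \sum_(j | j != y) af j by apply: sumr_ge0 => j _; exact: af_ge0.
  have h2 : 0 < af y by rewrite /af gQ //; exact: expR_gt0.
  lra.
split => //.
have key : forall y, - (Q y) * ln Sf + Q y - af y / Sf <=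
    (if Q y == 0 then 0 else Q y * (ln (Q y) - Lf y)).
  move=> y; case: (eqVneq (Q y) 0) => Qy.
    have := divr_ge0 (af_ge0 y) (ltW Spos); rewrite Qy; lra.
  have Qp : 0 < Q y by rewrite lt_def Qy Q0.
  rewrite /af gQ //.
  set u := Lf y - ln (Q y) - ln Sf.
  have hu : expR u = expR (Lf y) / (Q y * Sf).
    by rewrite /u !expRD !expRN !lnK ?posrE // invfM mulrA.
  have h1 := expR_ge1Dx u.
  have h2 : Q y * (1 + u) <= Q y * expR u by rewrite ler_wpM2l // ltW.
  have h3 : Q y * expR u = expR (Lf y) / Sf.
    by rewrite hu; field; rewrite Qy gt_eqF.
  move: h2; rewrite h3 /u; nra.
apply: le_trans (ler_sum _ (fun y _ => key y)).
rewrite sumrB big_split /= -!big_distrl /= sumrN Q1 -/Sf mulfV ?gt_eqF //; lra.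
Qed.

Lemma achieve : 0 < Sf ->
  dists (fun y => af y / Sf) /\ ~~ [exists y, ((af y / Sf) != 0) && ~~ good y] /\
  \sum_y (if af y / Sf == 0 then 0 else af y / Sf * (ln (af y / Sf) - Lf y)) = - ln Sf.
Proof.
move=> Sp; split; [split|split].
- by move=> y; exact: divr_ge0 (af_ge0 y) (ltW Sp).
- by rewrite -big_distrl /= -/Sf mulfV // gt_eqF.
- apply/existsPn => y; rewrite /af; case: (good y) => /=; first by rewrite andbF.
  by rewrite mul0r eqxx.
rewrite (eq_bigr (fun y => af y / Sf * - ln Sf)); last first.
  move=> y _; rewrite /af; case: (boolP (good y)) => gy; last by rewrite mul0r eqxx mul0r.
  rewrite mulf_eq0 invr_eq0 (gt_eqF (expR_gt0 _)) (gt_eqF Sp) /=.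
  rewrite ln_div ?posrE ?expR_gt0 // expRK; ring.
by rewrite -big_distrl /= -big_distrl /= -/Sf mulfV ?gt_eqF // mul1r.
Qed.

Lemma inf_Vc :
  ereal_inf ((fun QY : Y -> R =>
        KL (fun xy : (X * Y)%type => P xy.1 * QY xy.2)
           (fun xy : (X * Y)%type => P xy.1 * W xy.1 xy.2)) @` @dists R Y) = Vc.
Proof.
rewrite /Vc; case: ifPn => Sp.
  apply/eqP; rewrite eq_le; apply/andP; split.
    apply: ge_ereal_inf; exists ((- ln Sf)%:E) => //.
    have [HQ [Hn Hs]] := achieve Sp; exists (fun y => af y / Sf) => //.
    by rewrite (KL_form HQ) (negbTE Hn) Hs.
  apply/ereal_infP => _ [Q HQ <-]; rewrite KL_form //; case: ifPn => Hb.
    exact: leey.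
  by have [_ h] := gibbs HQ Hb; rewrite lee_fin.
apply/ereal_inf_pinfty => _ [Q HQ <-]; rewrite KL_form //; case: ifPn => // Hb.
by have [h _] := gibbs HQ Hb; rewrite h in Sp.
Qed.

End Chan.


Lemma sup_addr (R : realType) (x : \bar R) (B : set (\bar R)) (c : \bar R) :
  (forall b, B b -> (x + b <= c)%E) -> (x + ereal_sup B <= c)%E.
Proof.
move=> H; case: x H => [r| |] H.
- rewrite -leeBrDl //; apply/ereal_supP => b Bb; rewrite leeBrDl //; exact: H.
- case: (pselect (exists b, B b /\ b != -oo%E)) => [[b [Bb bn]]|nb].
    have := H _ Bb; rewrite addye // leye_eq => /eqP ->; exact: leey.
  have -> : ereal_sup B = -oo%E.
    apply/ereal_sup_ninfty => b Bb; apply/eqP; apply: contra_notT nb => bn.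
    by exists b.
  by rewrite addeNy leNye.
- by rewrite addNye leNye.
Qed.

Lemma sup_add_le (R : realType) (A B : set (\bar R)) (c : \bar R) :
  (forall a b, A a -> B b -> (a + b <= c)%E) -> (ereal_sup A + ereal_sup B <= c)%E.
Proof.
move=> H; apply: sup_addr => b Bb; rewrite addeC; apply: sup_addr => a Aa.
rewrite addeC; exact: H.
Qed.

Lemma Uch_Vc (R : realType) (X Y : finType) (W : X -> Y -> R) :
  (forall x y, 0 <= W x y) -> Uch W = ereal_sup ((fun P => Vc W P) @` @dists R X).
Proof.
move=> W0; rewrite /Uch; congr ereal_sup; apply/seteqP; split => _ [P HP <-];
  by exists P => //; rewrite (inf_Vc W0 HP).
Qed.

Lemma sum_pair (R : realType) (X1 X2 : finType) (F : (X1 * X2)%type -> R) :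
  \sum_(x : (X1 * X2)%type) F x = \sum_x1 \sum_x2 F (x1, x2).
Proof. by rewrite pair_big; apply: eq_bigr => -[]. Qed.

Section Prod.
Context (R : realType) (X1 Y1 X2 Y2 : finType)
  (W1 : X1 -> Y1 -> R) (W2 : X2 -> Y2 -> R) (P : (X1 * X2)%type -> R).
Hypothesis W10 : forall x y, 0 <= W1 x y.
Hypothesis W20 : forall x y, 0 <= W2 x y.
Hypothesis HP : dists P.

Definition m1 (x1 : X1) : R := \sum_x2 P (x1, x2).
Definition m2 (x2 : X2) : R := \sum_x1 P (x1, x2).

Lemma m1_dist : dists m1.
Proof.
case: HP => P0 P1; split; first by move=> x1; apply: sumr_ge0.
by rewrite -P1 sum_pair.
Qed.

Lemma m2_dist : dists m2.
Proof.
case: HP => P0 P1; split; first by move=> x2; apply: sumr_ge0.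
by rewrite -P1 sum_pair exchange_big.
Qed.

Lemma m1_nz x1 x2 : P (x1, x2) != 0 -> m1 x1 != 0.
Proof.
case: HP => P0 _ hx; rewrite /m1 (bigD1 x2) //=.
have h1 : 0 <= \sum_(j | j != x2) P (x1, j) by apply: sumr_ge0.
have h2 : 0 < P (x1, x2) by rewrite lt_def hx P0.
by rewrite gt_eqF //; lra.
Qed.

Lemma m2_nz x1 x2 : P (x1, x2) != 0 -> m2 x2 != 0.
Proof.
case: HP => P0 _ hx; rewrite /m2 (bigD1 x1) //=.
have h1 : 0 <= \sum_(j | j != x1) P (j, x2) by apply: sumr_ge0.
have h2 : 0 < P (x1, x2) by rewrite lt_def hx P0.
by rewrite gt_eqF //; lra.
Qed.

Lemma m1_ex x1 : m1 x1 != 0 -> exists x2, P (x1, x2) != 0.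
Proof.
move=> h; case: (pickP (fun x2 => P (x1, x2) != 0)) => [x2 Hx|H]; first by exists x2.
by move: h; rewrite /m1 big1 ?eqxx // => x2 _; apply/eqP; move/negbFE: (H x2).
Qed.

Lemma m2_ex x2 : m2 x2 != 0 -> exists x1, P (x1, x2) != 0.
Proof.
move=> h; case: (pickP (fun x1 => P (x1, x2) != 0)) => [x1 Hx|H]; first by exists x1.
by move: h; rewrite /m2 big1 ?eqxx // => x1 _; apply/eqP; move/negbFE: (H x1).
Qed.

Lemma good_prod y1 y2 :
  good (prod_channel W1 W2) P (y1, y2) = good W1 m1 y1 && good W2 m2 y2.
Proof.
apply/idP/andP.
  move/forallP => H; split; apply/forallP.
    move=> x1; apply/implyP => /m1_ex [x2 hx2].
    by have := implyP (H (x1, x2)) hx2; rewrite /prod_channel /= mulf_eq0 negb_or => /andP[].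
  move=> x2; apply/implyP => /m2_ex [x1 hx1].
  by have := implyP (H (x1, x2)) hx1; rewrite /prod_channel /= mulf_eq0 negb_or => /andP[].
case=> /forallP H1 /forallP H2; apply/forallP => -[x1 x2]; apply/implyP => hx.
rewrite /prod_channel /= mulf_neq0 //.
  exact: (implyP (H1 x1) (m1_nz hx)).
exact: (implyP (H2 x2) (m2_nz hx)).
Qed.

Lemma Lf_prod y1 y2 : good (prod_channel W1 W2) P (y1, y2) ->
  Lf (prod_channel W1 W2) P (y1, y2) = Lf W1 m1 y1 + Lf W2 m2 y2.
Proof.
move=> g; rewrite /Lf.
rewrite (eq_bigr (fun x => P x * ln (W1 x.1 y1) + P x * ln (W2 x.2 y2))); last first.
  move=> [x1 x2] _; case: (eqVneq (P (x1, x2)) 0) => hx.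
    by rewrite hx !mul0r addr0.
  have := implyP (forallP g (x1, x2)) hx; rewrite /prod_channel /= mulf_eq0 negb_or.
  case/andP => h1 h2.
  rewrite lnM ?posrE ?lt_def ?h1 ?h2 ?W10 ?W20 //; ring.
rewrite big_split /= !sum_pair; congr (_ + _).
  by apply: eq_bigr => x1 _; rewrite /m1 big_distrl.
by rewrite exchange_big /=; apply: eq_bigr => x2 _; rewrite /m2 big_distrl.
Qed.

Lemma af_prod y1 y2 :
  af (prod_channel W1 W2) P (y1, y2) = af W1 m1 y1 * af W2 m2 y2.
Proof.
rewrite /af good_prod; case: (boolP (good W1 m1 y1)) => g1;
  case: (boolP (good W2 m2 y2)) => g2 /=; rewrite ?mul0r ?mulr0 //.
by rewrite Lf_prod ?good_prod ?g1 ?g2 // expRD.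
Qed.

Lemma Sf_prod : Sf (prod_channel W1 W2) P = Sf W1 m1 * Sf W2 m2.
Proof.
rewrite /Sf sum_pair big_distrl /=; apply: eq_bigr => y1 _.
by rewrite big_distrr /=; apply: eq_bigr => y2 _; rewrite af_prod.
Qed.

Lemma Vc_prod : Vc (prod_channel W1 W2) P = (Vc W1 m1 + Vc W2 m2)%E.
Proof.
rewrite /Vc Sf_prod.
have s1 := Sf_ge0 W1 m1; have s2 := Sf_ge0 W2 m2.
have [p1|n1] := ltP 0 (Sf W1 m1); have [p2|n2] := ltP 0 (Sf W2 m2).
- by rewrite mulr_gt0 // lnM ?posrE // opprD EFinD.
- have -> : Sf W2 m2 = 0 by apply/le_anti; rewrite n2 s2.
  by rewrite mulr0 ltxx addey.
- have -> : Sf W1 m1 = 0 by apply/le_anti; rewrite n1 s1.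
  by rewrite mul0r ltxx addye.
- have -> : Sf W1 m1 = 0 by apply/le_anti; rewrite n1 s1.
  by rewrite mul0r ltxx.
Qed.

End Prod.

Theorem mainTheorem7 (R : realType) (X1 Y1 X2 Y2 : finType)
  (W1 : X1 -> Y1 -> R) (W2 : X2 -> Y2 -> R) :
  is_channel W1 -> is_channel W2 ->
  Uch (prod_channel W1 W2) = (Uch W1 + Uch W2)%E.
Proof.
move=> [W10 _] [W20 _].
have W0 : forall x y, 0 <= prod_channel W1 W2 x y.
  by move=> x y; rewrite /prod_channel mulr_ge0.
rewrite !Uch_Vc //.
apply/le_anti/andP; split.
  apply/ereal_supP => _ [P HP <-]; rewrite (Vc_prod W10 W20 HP).
  apply: leeD; apply: ereal_sup_ubound.
    by exists (m1 P) => //; exact: m1_dist.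
  by exists (m2 P) => //; exact: m2_dist.
apply: sup_add_le => _ _ [p1 Hp1 <-] [p2 Hp2 <-].
case: (Hp1) => p10 s1; case: (Hp2) => p20 s2.
pose P := fun x : (X1 * X2)%type => p1 x.1 * p2 x.2.
have HP : dists P.
  split; first by move=> x; rewrite /P mulr_ge0.
  rewrite sum_pair -s1; apply: eq_bigr => x1 _.
  by rewrite /P /= -big_distrr /= s2 mulr1.
have e1 : m1 P = p1.
  by apply/funext => x1; rewrite /m1 /P /= -big_distrr /= s2 mulr1.
have e2 : m2 P = p2.
  by apply/funext => x2; rewrite /m2 /P /= -big_distrl /= s1 mul1r.
apply: ereal_sup_ubound; exists P => //.
by rewrite (Vc_prod W10 W20 HP) e1 e2.
Qed.
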